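(* Let $\Sigma_C\subseteq N_C$ and $\Sigma_R\subseteq N_R$ be finite, let $B\in N_C\setminus\Sigma_C$, and let $\mathcal R$ be the TBox consisting of the axioms $B\sqsubseteq A$ for every $A\in\Sigma_C$ and $B\sqsubseteq\forall r.B$ for every $r\in\Sigma_R$. Let $\mathcal J$ be a model of $\mathcal R$ and $\mathcal I$ an interpretation with $\Delta^{\mathcal I}=\Delta^{\mathcal J}\setminus B^{\mathcal J}$, $A^{\mathcal I}=A^{\mathcal J}\setminus B^{\mathcal J}$ for every $A\in N_C$, and $r^{\mathcal I}=\{(x,y)\in r^{\mathcal J}\mid x\notin B^{\mathcal J},\ y\notin B^{\mathcal J}\}$ for every $r\in N_R$. Then for every $\mathcal{FL}_{\bot\mathit{reg}}$ concept description $K$ containing only concept names from $\Sigma_C$ and role names from $\Sigma_R$ we have $K^{\mathcal I}=(K^B)^{\mathcal J}\setminus B^{\mathcal J}$, where $K^B$ is obtained from $K$ by replacing every occurrence of $\bot$ with $B$.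
   Context: Let $N_C$ and $N_R$ be disjoint countably infinite sets of concept names and role names. Regular role expressions are generated by $E ::= \emptyset \mid \varepsilon \mid r \mid (E+E) \mid (EE) \mid E^{*}$ with $r\in N_R$, with languages $\mathcal L(E)\subseteq N_R^*$. $\mathcal{FL}_{\bot\mathit{reg}}$ concept descriptions: $C ::= A \mid \top \mid \bot \mid (C\sqcap C) \mid \forall E.C$ with $A\in N_C$. An interpretation $\mathcal I$ has a domain $\Delta^{\mathcal I}$, $A^{\mathcal I}\subseteq\Delta^{\mathcal I}$, $r^{\mathcal I}\subseteq(\Delta^{\mathcal I})^2$; $E^{\mathcal I}$ is the union over $r_1\cdots r_n\in\mathcal L(E)$ of $r_1^{\mathcal I}\circ\cdots\circ r_n^{\mathcal I}$ (identity for the empty word); $\top^{\mathcal I}=\Delta^{\mathcal I}$, $\bot^{\mathcal I}=\emptyset$, $\sqcap$ is intersection, $(\forall E.C)^{\mathcal I}=\{x\in\Delta^{\mathcal I}\mid y\in C^{\mathcal I}$ whenever $(x,y)\in E^{\mathcal I}\}$. $\mathcal J$ is a model of a TBox (finite set of axioms $K\sqsubseteq M$) if $K^{\mathcal J}\subseteq M^{\mathcal J}$ for all its axioms. *)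

(* Defs.v *)
(* Concept names and role names are both modelled by nat,
   in two separate syntactic positions (hence disjoint, countably infinite). *)
From Stdlib Require Import List.
Import ListNotations.

Definition cname := nat.
Definition rname := nat.

Inductive rexp : Type :=
| RNone : rexp
| REps  : rexp
| RAtom : rname -> rexp
| RPlus : rexp -> rexp -> rexp
| RCat  : rexp -> rexp -> rexp
| RStar : rexp -> rexp.

Inductive lang : rexp -> list rname -> Prop :=
| L_eps : lang REps []
| L_atom : forall r, lang (RAtom r) [r]
| L_plusl : forall E F w, lang E w -> lang (RPlus E F) w
| L_plusr : forall E F w, lang F w -> lang (RPlus E F) w
| L_cat : forall E F u v, lang E u -> lang F v -> lang (RCat E F) (u ++ v)
| L_star0 : forall E, lang (RStar E) []
| L_starS : forall E u v, lang E u -> lang (RStar E) v -> lang (RStar E) (u ++ v).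

Inductive concept : Type :=
| CName : cname -> concept
| CTop : concept
| CBot : concept
| CAnd : concept -> concept -> concept
| CAll : rexp -> concept -> concept.

Record interp : Type := {
  dom : Type;
  cn : cname -> dom -> Prop;
  rn : rname -> dom -> dom -> Prop
}.

Fixpoint word_rel (I : interp) (w : list rname) : dom I -> dom I -> Prop :=
  match w with
  | [] => fun x y => x = y
  | r :: w' => fun x y => exists z, rn I r x z /\ word_rel I w' z y
  end.

Definition rexp_rel (I : interp) (E : rexp) (x y : dom I) : Prop :=
  exists w, lang E w /\ word_rel I w x y.

Fixpoint csem (I : interp) (C : concept) : dom I -> Prop :=
  match C with
  | CName A => cn I A
  | CTop => fun _ => True
  | CBot => fun _ => False
  | CAnd C1 C2 => fun x => csem I C1 x /\ csem I C2 x
  | CAll E C' => fun x => forall y, rexp_rel I E x y -> csem I C' y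
  end.

Definition tbox := list (concept * concept).

Definition is_model (J : interp) (T : tbox) : Prop :=
  forall K M, In (K, M) T -> forall x, csem J K x -> csem J M x.

Fixpoint rexp_in_sig (SR : list rname) (E : rexp) : Prop :=
  match E with
  | RNone | REps => True
  | RAtom r => In r SR
  | RPlus E1 E2 | RCat E1 E2 => rexp_in_sig SR E1 /\ rexp_in_sig SR E2
  | RStar E1 => rexp_in_sig SR E1
  end.

Fixpoint concept_in_sig (SC : list cname) (SR : list rname) (K : concept) : Prop :=
  match K with
  | CName A => In A SC
  | CTop | CBot => True
  | CAnd K1 K2 => concept_in_sig SC SR K1 /\ concept_in_sig SC SR K2
  | CAll E K1 => rexp_in_sig SR E /\ concept_in_sig SC SR K1
  end.

Fixpoint replace_bot (B : cname) (K : concept) : concept :=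
  match K with
  | CName A => CName A
  | CTop => CTop
  | CBot => CName B
  | CAnd K1 K2 => CAnd (replace_bot B K1) (replace_bot B K2)
  | CAll E K1 => CAll E (replace_bot B K1)
  end.

Definition tboxR (SC : list cname) (SR : list rname) (B : cname) : tbox :=
  map (fun A => (CName B, CName A)) SC ++
  map (fun r => (CName B, CAll (RAtom r) (CName B))) SR.

Definition restr_dom (J : interp) (B : cname) : Type :=
  { x : dom J | ~ cn J B x }.

(* Main.v *)
Require Import Defs.
From Stdlib Require Import List Classical.
Import ListNotations.

Lemma lang_sig SR E w : lang E w -> rexp_in_sig SR E -> Forall (fun r => In r SR) w.
Proof.
  induction 1; simpl; intros Hs; try tauto.
  - constructor.
  - constructor; [assumption|constructor].
  - apply Forall_app; tauto.
  - constructor.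
  - apply Forall_app; auto.
Qed.

Lemma step_B SC SR B J (HJ : is_model J (tboxR SC SR B)) r x y :
  In r SR -> cn J B x -> rn J r x y -> cn J B y.
Proof.
  intros Hr Hx Hxy.
  assert (Hin : In (CName B, CAll (RAtom r) (CName B)) (tboxR SC SR B)).
  { unfold tboxR. apply in_or_app. right. apply in_map_iff. eauto. }
  specialize (HJ _ _ Hin x Hx). simpl in HJ. apply HJ.
  exists [r]. split; [constructor|]. simpl. eauto.
Qed.

Lemma word_B SC SR B J (HJ : is_model J (tboxR SC SR B)) w :
  Forall (fun r => In r SR) w -> forall x y, cn J B x -> word_rel J w x y -> cn J B y.
Proof.
  induction 1 as [|r w Hr0 Hw0 IHForall]; simpl; intros a b Ha Hw.
  - subst; auto.
  - destruct Hw as [z [Hz Hw]]. eapply IHForall; [|exact Hw].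
    eapply step_B; eauto.
Qed.

Lemma B_all SC SR B J (HJ : is_model J (tboxR SC SR B)) K :
  concept_in_sig SC SR K -> forall x, cn J B x -> csem J (replace_bot B K) x.
Proof.
  induction K; simpl; intros HK x Hx; auto.
  - assert (Hin : In (CName B, CName c) (tboxR SC SR B)).
    { unfold tboxR. apply in_or_app. left. apply in_map_iff. eauto. }
    exact (HJ _ _ Hin x Hx).
  - destruct HK; split; auto.
  - destruct HK as [HE HK]. intros y [w [Hl Hw]].
    apply IHK; auto. apply (word_B SC SR B J HJ w (lang_sig _ _ _ Hl HE) x y Hx Hw).
Qed.

Theorem lemma7 (SC : list cname) (SR : list rname) (B : cname)
  (HB : ~ In B SC)
  (J : interp) (HJ : is_model J (tboxR SC SR B))
  (cnI : cname -> restr_dom J B -> Prop)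
  (rnI : rname -> restr_dom J B -> restr_dom J B -> Prop)
  (HA : forall A (x : restr_dom J B), cnI A x <-> cn J A (proj1_sig x))
  (Hr : forall r (x y : restr_dom J B),
        rnI r x y <-> rn J r (proj1_sig x) (proj1_sig y))
  (K : concept) (HK : concept_in_sig SC SR K) :
  let I := {| dom := restr_dom J B; cn := cnI; rn := rnI |} in
  forall z : dom J,
    (exists x : dom I, csem I K x /\ proj1_sig x = z)
    <-> (csem J (replace_bot B K) z /\ ~ cn J B z).
Proof.
  intros I.
  assert (Hup : forall w (x y : restr_dom J B), word_rel I w x y ->
             word_rel J w (proj1_sig x) (proj1_sig y)).
  { induction w; simpl; intros x y H.
    - subst; reflexivity.
    - destruct H as [z [Hz Hw]]. exists (proj1_sig z). split; auto.
      apply Hr; exact Hz. }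
  assert (Hdown : forall w, Forall (fun r => In r SR) w ->
             forall (x : restr_dom J B) y, word_rel J w (proj1_sig x) y ->
             cn J B y \/ exists y' : restr_dom J B, proj1_sig y' = y /\ word_rel I w x y').
  { induction 1 as [|r w Hr0 Hw0 IHForall]; simpl; intros x y Hw.
    - right. exists x. auto.
    - destruct Hw as [z [Hz Hw]].
      destruct (classic (cn J B z)) as [HBz|HBz].
      + left. exact (word_B SC SR B J HJ w Hw0 z y HBz Hw).
      + destruct (IHForall (exist _ z HBz) y Hw) as [H1|[y' [Hy' Hw']]]; auto.
        right. exists y'. split; auto. exists (exist _ z HBz). split; auto.
        apply Hr. exact Hz. }
  assert (Main : forall K, concept_in_sig SC SR K -> forall x : restr_dom J B,
             csem I K x <-> csem J (replace_bot B K) (proj1_sig x)).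
  { induction K0; simpl; intros HK0 x.
    - apply HA.
    - tauto.
    - destruct x as [x Hx]; simpl; tauto.
    - destruct HK0. rewrite IHK0_1, IHK0_2 by auto. tauto.
    - destruct HK0 as [HE HK0]. split.
      + intros H y [w [Hl Hw]].
        destruct (Hdown w (lang_sig _ _ _ Hl HE) x y Hw) as [HBy|[y' [<- Hw']]].
        * eapply B_all; eauto.
        * apply IHK0; auto. apply H. exists w; auto.
      + intros H y [w [Hl Hw]]. apply IHK0; auto. apply H. exists w. split; auto. }
  intros z. split.
  - intros [x [Hx <-]]. split.
    + apply Main; auto.
    + exact (proj2_sig x).
  - intros [Hz HBz]. exists (exist _ z HBz). split; auto.
    apply Main; auto.
Qed.
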